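(* Let $I$ be a finite set and $X$ a finite or countable set. Put $V=X\sqcup(I\times\mathbb{N})$ and $V_n=X\sqcup(I\times J_n)$, where $J_n=\{1,\dots,n\}$, $J_0=\varnothing$. For a set $Y$ let $S(Y)$ be the group of finitely supported permutations of $Y$; let $S_\infty=S(\mathbb{N})$ and $S_n\subset S_\infty$ the permutations of $J_n$. Let $S_\infty$ act on $V$ by $\sigma(i,m)=(i,\sigma(m))$ on $I\times\mathbb{N}$ and trivially on $X$; this identifies $S_\infty$ with a subgroup of $S(V)$. Let $G_\infty$ be any subgroup of $S(V)$ containing $S_\infty$, set $G_n=G_\infty\cap S(V_n)$ (elements fixing every point outside $V_n$) and $K_n=S_n\subseteq G_n$. Let $G_n/\!/K_n$ be the set of orbits of $K_n$ acting on $G_n$ by conjugation and $\mathcal{C}=\coprod_{n\ge0}G_n/\!/K_n$ (disjoint union). For $c\in G_n/\!/K_n$ with representative $g\in G_n$ and $N\ge0$ define $A_N[c]\in\mathbb{C}(G_N)$ by $A_N[c]=\frac{1}{(N-n)!}\sum_{\tau\in K_N}\tau g\tau^{-1}$ if $N\ge n$ (with $g$ regarded as an element of $G_N\supseteq G_n$), and $A_N[c]=0$ if $N<n$. Then there exist non-negative integers $a^{e}_{c,d}$ ($c,d,e\in\mathcal{C}$), not depending on $N$ and with only finitely many $e$ having $a^e_{c,d}\ne0$ for fixed $c,d$, such that: (i) for every $N\ge0$ and all $c,d\in\mathcal{C}$, $A_N[c]*A_N[d]=\sum_{e\in\mathcal{C}}a^e_{c,d}A_N[e]$ in $\mathbb{C}(G_N)$;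 (ii) on the complex vector space with basis $\{A[c]:c\in\mathcal{C}\}$, the formula $A[c]*A[d]=\sum_e a^e_{c,d}A[e]$ (extended bilinearly) defines a structure of an associative algebra.
   Context: $\mathbb{C}(G)$ denotes the group algebra of a group $G$ (finitely supported complex functions) with convolution $*$. $A_N[c]$ does not depend on the choice of representative $g$. *)

(* Defs.v *)
From HB Require Import structures.
From mathcomp Require Import all_boot all_order all_algebra all_fingroup.
From mathcomp Require Import boolp complex Rstruct.
Set Implicit Arguments. Unset Strict Implicit. Unset Printing Implicit Defensive.
Import Order.TTheory GRing.Theory Num.Theory.
Local Open Scope ring_scope.

Definition Cplx : numClosedFieldType := (Rdefinitions.R)[i].

Section Defs.
Variables (I : finType) (X : countType).

(* V = X ⊔ (I × ℕ); the paper's ℕ = {1,2,...} is relabelled as Rocq's nat = {0,1,...},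
   so J_n = {1..n} becomes {0..n-1}. *)
Definition V := (X + I * nat)%type.

Definition inVn (n : nat) (v : V) : bool :=
  match v with inl _ => true | inr (_, m) => (m < n)%N end.

Definition fsupp (f : V -> V) : Prop :=
  exists s : seq V, forall v, v \notin s -> f v = v.
Definition SV (f : V -> V) : Prop := bijective f /\ fsupp f.

Definition is_subgroup (G : (V -> V) -> Prop) : Prop :=
  [/\ (forall f, G f -> SV f), G id,
      (forall f g, G f -> G g -> G (f \o g)) &
      (forall f g, G f -> cancel f g -> cancel g f -> G g)].

Definition lift_nat (s : nat -> nat) : V -> V :=
  fun v => match v with inl x => inl x | inr (i, m) => inr (i, s m) end.

Definition contains_Sinf (G : (V -> V) -> Prop) : Prop :=
  forall s : nat -> nat, bijective s ->
    (exists l : seq nat, forall k, k \notin l -> s k = k) -> G (lift_nat s).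

Definition Gn (G : (V -> V) -> Prop) (n : nat) (g : V -> V) : Prop :=
  G g /\ forall v, ~~ inVn n v -> g v = v.

Definition permK (n : nat) (t : {perm 'I_n}) : V -> V :=
  lift_nat (fun m => match (insub m : option 'I_n) with
                     | Some k => nat_of_ord (t k) | None => m end).

Definition conjK (n : nat) (t : {perm 'I_n}) (g : V -> V) : V -> V :=
  permK t \o g \o permK t^-1.

Definition orbit_of (ng : nat * (V -> V)) : (nat * (V -> V) -> Prop) :=
  fun mh => mh.1 = ng.1 /\ exists t : {perm 'I_ng.1}, mh.2 = conjK t ng.2.

Definition Cls (G : (V -> V) -> Prop) : Type :=
  {S : (nat * (V -> V) -> Prop) | exists ng, Gn G ng.1 ng.2 /\ S = orbit_of ng}.

Definition clsrep (G : (V -> V) -> Prop) (c : Cls G) : nat * (V -> V) :=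
  projT1 (cid (proj2_sig c)).

(* Elements of the group algebra ℂ(G_N) written as formal finite linear
   combinations of group elements; two formal sums represent the same element
   iff all their coefficients agree. *)
Definition fsum := seq (Cplx * (V -> V)).
Definition coef (s : fsum) (h : V -> V) : Cplx :=
  \sum_(p <- s) (if `[< p.2 = h >] then p.1 else 0).
Definition feq (s t : fsum) : Prop := forall h, coef s h = coef t h.
Definition fmul (s t : fsum) : fsum :=
  [seq (p.1 * q.1, p.2 \o q.2) | p <- s, q <- t].
Definition fscale (k : Cplx) (s : fsum) : fsum := [seq (k * p.1, p.2) | p <- s].

Definition AN (N : nat) (ng : nat * (V -> V)) : fsum :=
  if (ng.1 <= N)%N then
    [seq ((((N - ng.1)`!)%:R)^-1, conjK t ng.2) | t : {perm 'I_N}]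
  else [::].

End Defs.

(* Main.v *)
Require Import Defs.
From HB Require Import structures.
From mathcomp Require Import all_boot all_order all_algebra all_fingroup.
From mathcomp Require Import boolp complex Rstruct.
Import Order.TTheory GRing.Theory Num.Theory.
Local Open Scope ring_scope.
Set Implicit Arguments. Unset Strict Implicit. Unset Printing Implicit Defensive.

Section S.
Variables (I : finType) (X : countType).
Local Notation V := (V I X).
Local Notation lift := (@lift_nat I X).

Definition tn (n : nat) (t : {perm 'I_n}) : nat -> nat :=
  fun m => match (insub m : option 'I_n) with
           | Some k => nat_of_ord (t k) | None => m end.

Lemma tnE n (t : {perm 'I_n}) (i : 'I_n) : tn t i = t i.
Proof. by rewrite /tn valK. Qed.

Lemma tn_ge n (t : {perm 'I_n}) m : (n <= m)%N -> tn t m = m.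
Proof. by move=> h; rewrite /tn insubN // -leqNgt. Qed.

Lemma tn_lt n (t : {perm 'I_n}) m : (m < n)%N -> (tn t m < n)%N.
Proof. by move=> h; rewrite /tn insubT /=. Qed.

Lemma tnK n (t : {perm 'I_n}) : cancel (tn t) (tn t^-1).
Proof.
move=> m; case: (ltnP m n) => h.
  by rewrite -[m]/(nat_of_ord (Ordinal h)) tnE tnE permK.
by rewrite !tn_ge.
Qed.

Lemma tnKV n (t : {perm 'I_n}) : cancel (tn t^-1) (tn t).
Proof. by move=> m; have := tnK t^-1 m; rewrite invgK. Qed.

Lemma tnM n (s t : {perm 'I_n}) m : tn (s * t)%g m = tn t (tn s m).
Proof.
case: (ltnP m n) => h.
  by rewrite -[m]/(nat_of_ord (Ordinal h)) !tnE permM.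
by rewrite !tn_ge.
Qed.

Lemma tn1 n m : tn (1%g : {perm 'I_n}) m = m.
Proof. by case: (ltnP m n) => h; [rewrite -[m]/(nat_of_ord (Ordinal h)) tnE perm1|rewrite tn_ge]. Qed.

Lemma lift_comp (a b : nat -> nat) v : lift (a \o b) v = lift a (lift b v).
Proof. by case: v => [x|[i m]]. Qed.

Lemma lift_can (a b : nat -> nat) : cancel a b -> cancel (lift a) (lift b).
Proof. by move=> ab [x|[i m]] //=; rewrite ab. Qed.

Definition conjL (a b : nat -> nat) (x : V -> V) : V -> V := lift a \o x \o lift b.

Lemma conjKE n (t : {perm 'I_n}) x : conjK t x = conjL (tn t) (tn t^-1) x.
Proof. by []. Qed.

Definition suppk k (x : V -> V) := forall v, ~~ inVn k v -> x v = v.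

Lemma supp_in k x v : injective x -> suppk k x -> inVn k v -> inVn k (x v).
Proof.
move=> ix sx iv; apply/negP => /negP nv.
have e := ix _ _ (sx _ nv). by move: nv; rewrite e iv.
Qed.

Lemma supp_mon k k' x : (k <= k')%N -> suppk k x -> suppk k' x.
Proof.
move=> kk sx [c|[i j]] //= h; apply: sx => /=; apply: contra h => h.
exact: leq_trans h kk.
Qed.

Lemma lift_in k (a b : nat -> nat) w :
  (forall j, (j < k)%N -> a j = b j) -> inVn k w -> lift a w = lift b w.
Proof. by move=> ab; case: w => [c|[i j]] //= h; rewrite ab. Qed.

Lemma conjL_local k a a' b b' x : injective x -> suppk k x ->
  cancel a a' -> cancel a' a -> cancel b b' -> cancel b' b ->
  (forall j, (j < k)%N -> a j = b j) -> conjL a a' x = conjL b b' x.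
Proof.
move=> ix sx aK aK' bK bK' ab; apply: funext => v; rewrite /conjL /=.
case: v => [c|[i j]] /=.
  by apply: (lift_in ab); apply: supp_in.
case: (ltnP (a' j) k) => hj.
  have e : b' j = a' j by rewrite -[in LHS](aK' j) ab // bK.
  rewrite e; apply: (lift_in ab); exact: supp_in.
have hb : (k <= b' j)%N.
  rewrite leqNgt; apply/negP => hb.
  by move: hj; rewrite -[j](bK' j) -ab // aK leqNgt hb.
rewrite !sx /= ?aK' ?bK' //= -leqNgt //.
Qed.

Lemma conjL_supp m k a a' x : suppk m x ->
  (forall j, (j < m)%N -> (a j < k)%N) -> cancel a a' -> cancel a' a ->
  suppk k (conjL a a' x).
Proof.
move=> sx ak aK aK' [c|[i j]] //= h; rewrite /conjL /=.
case: (ltnP (a' j) m) => hj.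
  by move: h; rewrite -[j]aK' ak.
by rewrite sx /= ?aK' // -leqNgt.
Qed.

Lemma conjL_inj a a' x : cancel a a' -> cancel a' a -> injective x ->
  injective (conjL a a' x).
Proof.
move=> aK aK' ix; apply: inj_comp; last exact: can_inj (lift_can aK').
apply: inj_comp => //; exact: can_inj (lift_can aK).
Qed.

Lemma conjL_comp a a' b b' x :
  conjL a a' (conjL b b' x) = conjL (a \o b) (b' \o a') x.
Proof. by apply: funext => v; rewrite /conjL /= (lift_comp b' a') (lift_comp a b). Qed.

Lemma conjL_mul a a' x y : cancel a a' ->
  conjL a a' (x \o y) = conjL a a' x \o conjL a a' y.
Proof. by move=> aK; apply: funext => v; rewrite /conjL /= (lift_can aK). Qed.

Lemma conjL_id a a' x : a =1 id -> a' =1 id -> conjL a a' x = x.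
Proof.
move=> ha ha'; apply: funext => v; rewrite /conjL /=.
have li c : c =1 id -> forall w, lift c w = w by move=> hc [?|[? ?]] //=; rewrite hc.
by rewrite !li.
Qed.


Definition Inj k N := [set f : {ffun 'I_k -> 'I_N} | injectiveb f].

Definition ffn k N (f : {ffun 'I_k -> 'I_N}) : nat -> nat :=
  fun j => match (insub j : option 'I_k) with Some o => nat_of_ord (f o) | None => j end.

Lemma ffnE k N (f : {ffun 'I_k -> 'I_N}) (i : 'I_k) : ffn f i = f i.
Proof. by rewrite /ffn valK. Qed.

Lemma ext_nat N k (f : nat -> nat) : (k <= N)%N ->
  (forall i, (i < k)%N -> (f i < N)%N) ->
  (forall i j, (i < k)%N -> (j < k)%N -> f i = f j -> i = j) ->
  exists t : {perm 'I_N}, forall j, (j < k)%N -> tn t j = f j.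
Proof.
elim: k => [|k IH] kN fN fI; first by exists 1%g.
have [|||t' ht'] := IH; first exact: ltnW.
- by move=> i ik; apply: fN; apply: ltnW.
- by move=> i j ik jk; apply: fI; apply: ltnW.
pose a := t' (Ordinal kN); pose b := Ordinal (fN k (ltnSn k)).
exists (t' * tperm a b)%g => j jk.
have jN : (j < N)%N := leq_trans jk kN.
rewrite -[j]/(nat_of_ord (Ordinal jN)) tnE permM.
case: (ltngtP j k) => [jlt||je]; last 2 first.
- by rewrite ltnS leqNgt in jk; move/negP: jk.
- have -> : Ordinal jN = Ordinal kN by apply: val_inj.
  by rewrite tpermL /= ?je.
have e : nat_of_ord (t' (Ordinal jN)) = f j by rewrite -tnE ht'.
have h1 : a != t' (Ordinal jN).
  apply/eqP => /perm_inj /(congr1 val) /= ejk.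
  by move: jlt; rewrite -ejk ltnn.
have h2 : b != t' (Ordinal jN).
  apply/eqP => /(congr1 val) /= efk; rewrite e in efk.
  have ekj := fI _ _ (ltnSn k) (ltnW jlt) efk.
  by move: jlt; rewrite -ekj ltnn.
by rewrite tpermD.
Qed.

Lemma inj_leq k N (f : {ffun 'I_k -> 'I_N}) : injective f -> (k <= N)%N.
Proof. by move=> fi; have := @leq_card _ _ f fi; rewrite !card_ord. Qed.

Lemma ext_ffun k N (f : {ffun 'I_k -> 'I_N}) : injective f ->
  exists t : {perm 'I_N}, forall j, (j < k)%N -> tn t j = ffn f j.
Proof.
move=> fi; apply: ext_nat; first exact: inj_leq fi.
  by move=> p ik; rewrite -[p]/(nat_of_ord (Ordinal ik)) ffnE.
move=> p q ik jk; rewrite -[p]/(nat_of_ord (Ordinal ik)) -[q]/(nat_of_ord (Ordinal jk)) !ffnE.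
by move/val_inj/fi/(congr1 val).
Qed.

Definition extp k N (f : {ffun 'I_k -> 'I_N}) : {perm 'I_N} :=
  match pselect (exists t : {perm 'I_N}, forall j, (j < k)%N -> tn t j = ffn f j) with
  | left H => projT1 (cid H) | right _ => 1%g end.

Lemma extpP k N (f : {ffun 'I_k -> 'I_N}) : injective f ->
  forall j, (j < k)%N -> tn (extp f) j = ffn f j.
Proof.
move=> fi; rewrite /extp; case: pselect => [H|H]; first by case: (cid H).
by case: H; apply: ext_ffun.
Qed.

Definition conjI k N (f : {ffun 'I_k -> 'I_N}) (x : V -> V) : V -> V := conjK (extp f) x.

Definition restr k N (H : (k <= N)%N) (t : {perm 'I_N}) : {ffun 'I_k -> 'I_N} :=
  [ffun i => t (widen_ord H i)].

Lemma restr_inj k N (H : (k <= N)%N) t : injective (restr H t).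
Proof.
move=> i j; rewrite !ffunE => /perm_inj /(congr1 val) /= e; exact: val_inj.
Qed.

Lemma ffn_restr k N (H : (k <= N)%N) t j : (j < k)%N -> ffn (restr H t) j = tn t j.
Proof.
move=> jk; rewrite -[j]/(nat_of_ord (Ordinal jk)) ffnE ffunE.
by rewrite -[X in _ = tn _ X]/(nat_of_ord (widen_ord H (Ordinal jk))) tnE.
Qed.

Lemma conjK_local k N (t s : {perm 'I_N}) x : injective x -> suppk k x ->
  (forall j, (j < k)%N -> tn t j = tn s j) -> conjK t x = conjK s x.
Proof.
move=> ix sx ts; rewrite !conjKE; apply: (conjL_local ix sx) => //;
  by [apply: tnK | apply: tnKV].
Qed.

Lemma conjK_restr k N (H : (k <= N)%N) t x : injective x -> suppk k x ->
  conjK t x = conjI (restr H t) x.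
Proof.
move=> ix sx; apply: (conjK_local ix sx) => j jk.
by rewrite extpP ?ffn_restr //; apply: restr_inj.
Qed.

Lemma card_ltk N k : (k <= N)%N -> #|[set i : 'I_N | (i < k)%N]| = k.
Proof.
move=> H; have -> : [set i : 'I_N | (i < k)%N] = widen_ord H @: [set: 'I_k].
  apply/setP => i; rewrite inE; apply/idP/imsetP => [ik|[j _ ->]] //=.
  by exists (Ordinal ik); [rewrite in_setT | apply: val_inj].
rewrite card_imset ?cardsT ?card_ord //.
by move=> i j /(congr1 val) /= e; apply: val_inj.
Qed.

Lemma card_gek N k : (k <= N)%N -> #|[set i : 'I_N | (k <= i)%N]| = (N - k)%N.
Proof.
move=> H; have := cardsC [set i : 'I_N | (i < k)%N]; rewrite card_ord card_ltk //.
have -> : ~: [set i : 'I_N | (i < k)%N] = [set i : 'I_N | (k <= i)%N].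
  by apply/setP => i; rewrite !inE -leqNgt.
by move=> e; apply/eqP; rewrite -(eqn_add2l k) e subnKC.
Qed.

Lemma fiber k N (H : (k <= N)%N) (F : {ffun 'I_k -> 'I_N} -> Cplx) :
  \sum_(t : {perm 'I_N}) F (restr H t) = ((N - k)`!)%:R * \sum_(f in Inj k N) F f.
Proof.
rewrite (partition_big (restr H) (mem (Inj k N))); last first.
  by move=> t _; rewrite !inE; apply/injectiveP; apply: restr_inj.
rewrite mulr_sumr; apply: eq_bigr => f fIn.
have fi : injective f by move: fIn; rewrite !inE => /injectiveP.
rewrite (eq_bigr (fun _ => F f)); last by move=> t /eqP ->.
rewrite (eq_bigl (mem [set t | restr H t == f])); last by move=> t; rewrite !inE.
rewrite sumr_const mulr_natl; congr (_ *+ _).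
pose A := [set i : 'I_N | (k <= i)%N].
pose t0 := extp f.
have r0 : restr H t0 = f.
  apply/ffunP => i; apply: val_inj; rewrite ffunE /=.
  by rewrite -tnE extpP //= ?ffnE.
rewrite (eq_card (B := (mulg^~ t0) @: perm_on A)); last first.
  move=> t; rewrite inE; apply/eqP/imsetP => [rt|[th thA ->]].
    exists (t * t0^-1)%g; last by rewrite mulgVK.
    apply/subsetP => i; rewrite !inE; apply: contraR; rewrite -ltnNge => ik.
    rewrite permM.
    have : restr H t (Ordinal ik) = restr H t0 (Ordinal ik) by rewrite rt r0.
    rewrite !ffunE.
    have -> : widen_ord H (Ordinal ik) = i by apply: val_inj.
    by move=> ->; rewrite permK.
  apply/ffunP => i; rewrite -r0 !ffunE permM (out_perm thA) //.
  by rewrite inE -ltnNge /=.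
by rewrite card_imset ?card_perm ?card_gek //; apply: mulIg.
Qed.


Definition Tk N k (x : V -> V) (y : V -> V) : Cplx :=
  \sum_(f in Inj k N) (if `[< conjI f x = y >] then 1 else 0).

Lemma Inj0 k N f : (N < k)%N -> (f \in Inj k N) = false.
Proof.
move=> kN; apply/negP; rewrite inE => /injectiveP fi.
by have := inj_leq fi; rewrite leqNgt kN.
Qed.

Lemma Tk0 N k x y : (N < k)%N -> Tk N k x y = 0.
Proof. by move=> kN; rewrite /Tk big_pred0 // => f; rewrite Inj0. Qed.

Lemma fact_neq0 n : ((n`!)%:R : Cplx) != 0.
Proof. by rewrite pnatr_eq0 -lt0n fact_gt0. Qed.

Lemma coefAN N k x y : injective x -> suppk k x ->
  coef (AN N (k, x)) y = Tk N k x y.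
Proof.
move=> ix sx; rewrite /AN /=; case: (leqP k N) => H; last first.
  by rewrite Tk0 // /coef big_nil.
rewrite /coef big_map big_enum /=.
rewrite (eq_bigr (fun t => ((N - k)`!%:R)^-1 *
   (fun f => if `[< conjI f x = y >] then 1 else 0) (restr H t))); last first.
  by move=> t _; rewrite -(conjK_restr H t ix sx); case: ifP; rewrite ?mulr1 ?mulr0.
rewrite -mulr_sumr (fiber H (fun f => if `[< conjI f x = y >] then 1 else 0)).
by rewrite mulrA mulVf ?mul1r ?fact_neq0.
Qed.

Lemma coef_fmul (s t : fsum I X) (y : V -> V) : coef (fmul s t) y =
  \sum_(p <- s) \sum_(q <- t) (if `[< p.2 \o q.2 = y >] then p.1 * q.1 else 0).
Proof. by rewrite /coef /fmul big_allpairs_dep. Qed.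

Definition Dk N n (g : V -> V) m (h : V -> V) (y : V -> V) : Cplx :=
  \sum_(f in Inj n N) \sum_(f' in Inj m N)
     (if `[< conjI f g \o conjI f' h = y >] then 1 else 0).

Lemma coef_fmulAN N n g m h y : injective g -> suppk n g -> injective h -> suppk m h ->
  coef (fmul (AN N (n, g)) (AN N (m, h))) y = Dk N n g m h y.
Proof.
move=> ig sg ih sh; rewrite coef_fmul /Dk /AN /=.
case: (leqP n N) => Hn; last first.
  by rewrite big_nil big_pred0 // => f; rewrite Inj0.
case: (leqP m N) => Hm; last first.
  rewrite big1; last by move=> p _; rewrite big_nil.
  by rewrite big1 // => f _; rewrite big_pred0 // => f'; rewrite Inj0.
rewrite big_map big_enum /=.
pose cn : Cplx := ((N - n)`!%:R)^-1; pose cm : Cplx := ((N - m)`!%:R)^-1.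
rewrite (eq_bigr (fun t => cn * (fun f => \sum_(f' in Inj m N)
     (if `[< conjI f g \o conjI f' h = y >] then 1 else 0)) (restr Hn t))); last first.
  move=> t _; rewrite big_map big_enum /=.
  rewrite (eq_bigr (fun s => cn * (cm * (fun f' =>
     (if `[< conjI (restr Hn t) g \o conjI f' h = y >] then 1 else 0)) (restr Hm s)))); last first.
    move=> s _; rewrite -(conjK_restr Hn t ig sg) -(conjK_restr Hm s ih sh).
    by case: ifP; rewrite ?mulr1 ?mulr0.
  rewrite -mulr_sumr -mulr_sumr.
  rewrite (fiber Hm (fun f' => if `[< conjI (restr Hn t) g \o conjI f' h = y >] then 1 else 0)).
  by congr (_ * _); rewrite /cm mulrA mulVf ?mul1r ?fact_neq0.
rewrite -mulr_sumr (fiber Hn (fun f => \sum_(f' in Inj m N)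
     (if `[< conjI f g \o conjI f' h = y >] then 1 else 0))).
by rewrite /cn mulrA mulVf ?mul1r ?fact_neq0.
Qed.


Section Pat.
Variables (n m : nat).
Implicit Types (psi : {ffun 'I_m -> 'I_(n + m)}).

Definition newset psi := [set j : 'I_m | (n <= psi j)%N].
Definition cntp psi (j : 'I_m) := #|[set j' : 'I_m | (j' < j)%N && (n <= psi j')%N]|.
Definition normal psi : bool := injectiveb psi &&
  [forall j, (n <= psi j)%N ==> (nat_of_ord (psi j) == n + cntp psi j)%N].
Definition kp psi := (n + #|newset psi|)%N.
Definition Pat := [set psi | normal psi].

Lemma card_interval M a b : (a <= b)%N -> (b <= M)%N ->
  #|[set i : 'I_M | (a <= i)%N && (i < b)%N]| = (b - a)%N.
Proof.
move=> ab bM.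
have -> : [set i : 'I_M | (a <= i)%N && (i < b)%N] =
   [set i : 'I_M | (i < b)%N] :\: [set i : 'I_M | (i < a)%N].
  by apply/setP => i; rewrite !inE -leqNgt andbC.
rewrite cardsD card_ltk //.
have -> : [set i : 'I_M | (i < b)%N] :&: [set i : 'I_M | (i < a)%N] = [set i : 'I_M | (i < a)%N].
  apply/setP => i; rewrite !inE andbC; case: (ltnP i a) => //= ia.
  exact: leq_trans ia ab.
by rewrite card_ltk // (leq_trans ab bM).
Qed.

Lemma cntp_lt psi j : (n <= psi j)%N -> (cntp psi j < #|newset psi|)%N.
Proof.
move=> hj; apply: proper_card; apply/properP; split.
  by apply/subsetP => j'; rewrite !inE => /andP[].
by exists j; rewrite !inE ?ltnn //.
Qed.

Lemma normal_inj psi : normal psi -> injective psi.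
Proof. by case/andP => /injectiveP. Qed.

Lemma normal_new psi j : normal psi -> (n <= psi j)%N ->
  nat_of_ord (psi j) = (n + cntp psi j)%N.
Proof. by case/andP => _ /forallP /(_ j) /implyP H /H /eqP. Qed.

Lemma psi_lt psi j : normal psi -> (psi j < kp psi)%N.
Proof.
move=> H; case: (leqP n (psi j)) => hj.
  by rewrite (normal_new H hj) /kp ltn_add2l cntp_lt.
exact: leq_trans hj (leq_addr _ _).
Qed.

Lemma kp_le psi : (kp psi <= n + m)%N.
Proof. by rewrite /kp leq_add2l -[X in (_ <= X)%N](card_ord m) max_card. Qed.

Lemma psi_surj psi i : normal psi -> (n <= i)%N -> (i < kp psi)%N ->
  exists j, nat_of_ord (psi j) = i.
Proof.
move=> H ni ik.
have iM : (i < n + m)%N := leq_trans ik (kp_le psi).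
pose Iv := [set i : 'I_(n + m) | (n <= i)%N && (i < kp psi)%N].
have E : psi @: newset psi = Iv.
  apply/eqP; rewrite eqEcard; apply/andP; split.
    apply/subsetP => x /imsetP[j]; rewrite !inE => hj ->.
    by rewrite hj psi_lt.
  rewrite card_imset; last exact: normal_inj.
  by rewrite card_interval ?leq_addr ?kp_le // /kp addKn.
have : Ordinal iM \in Iv by rewrite !inE ni ik.
by rewrite -E => /imsetP[j _ e]; exists j; rewrite -e.
Qed.


Lemma cnt_mono (P : pred 'I_m) (j1 j2 : 'I_m) : (j1 < j2)%N -> P j1 ->
  (#|[set j' : 'I_m | (j' < j1)%N && P j']| < #|[set j' : 'I_m | (j' < j2)%N && P j']|)%N.
Proof.
move=> lt p1; apply: proper_card; apply/properP; split.
  apply/subsetP => j'; rewrite !inE => /andP[a b]; rewrite b andbT.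
  exact: ltn_trans a lt.
by exists j1; rewrite !inE ?lt ?p1 ?ltnn.
Qed.

Lemma cnt_le (P : pred 'I_m) (j : 'I_m) :
  (#|[set j' : 'I_m | (j' < j)%N && P j']| <= j)%N.
Proof.
rewrite -[X in (_ <= X)%N](card_ltk (ltnW (ltn_ord j))).
by apply: subset_leq_card; apply/subsetP => j'; rewrite !inE => /andP[].
Qed.

Variable N : nat.
Implicit Types (phi : {ffun 'I_n -> 'I_N}) (chi : {ffun 'I_m -> 'I_N}).

Definition cntc phi chi (j : 'I_m) :=
  #|[set j' : 'I_m | (j' < j)%N && (chi j' \notin codom phi)]|.

Lemma cntc_lt phi chi j : (cntc phi chi j < m)%N.
Proof. exact: leq_ltn_trans (cnt_le _ j) (ltn_ord j). Qed.

Definition pat phi chi : {ffun 'I_m -> 'I_(n + m)} :=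
  [ffun j => if [pick i | phi i == chi j] is Some i then lshift m i
             else rshift n (Ordinal (cntc_lt phi chi j))].

Lemma patP phi chi j :
  (chi j \in codom phi -> exists i, phi i = chi j /\ nat_of_ord (pat phi chi j) = i) /\
  (chi j \notin codom phi -> nat_of_ord (pat phi chi j) = (n + cntc phi chi j)%N).
Proof.
rewrite ffunE; case: pickP => [i /eqP e | none]; split.
- by move=> _; exists i.
- by rewrite -e codom_f.
- by case/codomP => i e; move: (none i); rewrite e eqxx.
- by [].
Qed.

Lemma pat_new phi chi j : (n <= pat phi chi j)%N = (chi j \notin codom phi).
Proof.
have [P1 P2] := patP phi chi j.
case: (boolP (chi j \in codom phi)) => h /=.
  by have [i [_ ->]] := P1 h; rewrite leqNgt ltn_ord.
by rewrite P2 // leq_addr.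
Qed.

Lemma pat_normal phi chi : injective phi -> injective chi -> normal (pat phi chi).
Proof.
move=> fi ci; apply/andP; split; last first.
  apply/forallP => j; apply/implyP => hj.
  have [_ P2] := patP phi chi j; rewrite P2 -?pat_new //; apply/eqP; congr (_ + _)%N.
  by apply: eq_card => j'; rewrite !inE pat_new.
apply/injectiveP => j1 j2 e.
have [A1 B1] := patP phi chi j1; have [A2 B2] := patP phi chi j2.
case: (boolP (chi j1 \in codom phi)) => h1; case: (boolP (chi j2 \in codom phi)) => h2.
- have [i1 [e1 v1]] := A1 h1; have [i2 [e2 v2]] := A2 h2.
  apply: ci; rewrite -e1 -e2; congr (phi _); apply: ord_inj.
  by rewrite -v1 -v2 e.
- have p1 := pat_new phi chi j1; have p2 := pat_new phi chi j2.
  by move: p1; rewrite e p2 h1 (negPf h2).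
- have p1 := pat_new phi chi j1; have p2 := pat_new phi chi j2.
  by move: p1; rewrite e p2 h2 (negPf h1).
- have ec : cntc phi chi j1 = cntc phi chi j2.
    by apply/eqP; rewrite -(eqn_add2l n) -B1 // -B2 // e.
  case: (ltngtP j1 j2) => [lt|lt|eq]; last exact: val_inj.
  + move: (@cnt_mono (fun j' => chi j' \notin codom phi) _ _ lt h1).
    by change ((cntc phi chi j1 < cntc phi chi j2)%N -> j1 = j2); rewrite ec ltnn.
  + move: (@cnt_mono (fun j' => chi j' \notin codom phi) _ _ lt h2).
    by change ((cntc phi chi j2 < cntc phi chi j1)%N -> j1 = j2); rewrite ec ltnn.
Qed.


Section Theta.
Variables (psi : {ffun 'I_m -> 'I_(n + m)}) (H : normal psi).
Implicit Types (w : {ffun 'I_(kp psi) -> 'I_N}).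

Definition Th1 (w : {ffun 'I_(kp psi) -> 'I_N}) : {ffun 'I_n -> 'I_N} :=
  [ffun i => w (widen_ord (leq_addr _ n) i)].
Definition Th2 (w : {ffun 'I_(kp psi) -> 'I_N}) : {ffun 'I_m -> 'I_N} :=
  [ffun j => w (Ordinal (@psi_lt psi j H))].

Lemma Th_new w j : injective w -> (Th2 w j \notin codom (Th1 w)) = (n <= psi j)%N.
Proof.
move=> wi; apply/idP/idP.
  apply: contraR; rewrite -ltnNge => hj; apply/codomP.
  exists (Ordinal hj); rewrite !ffunE; congr (w _); exact: val_inj.
move=> hj; apply/codomP; case=> i; rewrite !ffunE => /wi /(congr1 val) /= e.
by move: (ltn_ord i); rewrite -e ltnNge hj.
Qed.

Lemma pat_Th w : injective w -> pat (Th1 w) (Th2 w) = psi.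
Proof.
move=> wi; apply/ffunP => j; apply: ord_inj.
have [P1 P2] := patP (Th1 w) (Th2 w) j.
case: (leqP n (psi j)) => hj.
  rewrite P2 ?Th_new // (normal_new H hj); congr (_ + _)%N.
  by apply: eq_card => j'; rewrite !inE Th_new.
have hin : Th2 w j \in codom (Th1 w) by rewrite -[_ \in _]negbK Th_new // -ltnNge.
have [i [e ->]] := P1 hin; move: e; rewrite !ffunE => /wi /(congr1 val) /= ->.
by [].
Qed.

Lemma Th_inj : injective (fun w => (Th1 w, Th2 w)).
Proof.
move=> w1 w2 [e1 e2]; apply/ffunP => i.
case: (ltnP i n) => hi.
  have := congr1 (fun f : {ffun 'I_n -> 'I_N} => f (Ordinal hi)) e1.
  rewrite !ffunE; have -> : widen_ord (leq_addr _ n) (Ordinal hi) = i by apply: val_inj.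
  by [].
have [j ej] := psi_surj H hi (ltn_ord i).
have := congr1 (fun f : {ffun 'I_m -> 'I_N} => f j) e2.
rewrite !ffunE; have -> : Ordinal (@psi_lt psi j H) = i by apply: val_inj.
by [].
Qed.

Lemma Th_img phi chi : injective phi -> injective chi -> pat phi chi = psi ->
  exists w, [/\ injective w, Th1 w = phi & Th2 w = chi].
Proof.
move=> fi ci ep.
have spec : forall i : 'I_(kp psi), exists d : 'I_N,
    (forall o : 'I_n, nat_of_ord o = i -> d = phi o) /\
    (forall j, nat_of_ord (psi j) = i -> d = chi j).
  move=> i; case: (ltnP i n) => hi.
    exists (phi (Ordinal hi)); split.
      by move=> o e; congr (phi _); apply: val_inj.
    move=> j e; have [P1 _] := patP phi chi j.
    have hin : chi j \in codom phi.
      by rewrite -[_ \in _]negbK -pat_new ep e -ltnNge.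
    have [o [eo vo]] := P1 hin; rewrite -eo; congr (phi _); apply: val_inj.
    by rewrite /= -e -vo ep.
  have [j0 e0] := psi_surj H hi (ltn_ord i).
  exists (chi j0); split.
    by move=> o e; move: (ltn_ord o); rewrite e ltnNge hi.
  by move=> j e; congr (chi _); apply: (normal_inj H); apply: ord_inj; rewrite e0 e.
have [u hu] := fin_all_exists spec.
exists [ffun i => u i]; split.
- move=> i1 i2; rewrite !ffunE => e.
  case: (ltnP i1 n) => h1; case: (ltnP i2 n) => h2.
  + have [a1 _] := hu i1; have [a2 _] := hu i2.
    move: e; rewrite (a1 (Ordinal h1)) // (a2 (Ordinal h2)) // => /fi /(congr1 val) /= e.
    exact: val_inj.
  + have [j2 e2] := psi_surj H h2 (ltn_ord i2).
    have [a1 _] := hu i1; have [_ b2] := hu i2.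
    move: e; rewrite (a1 (Ordinal h1)) // (b2 j2) // => e.
    have : chi j2 \notin codom phi by rewrite -pat_new ep e2.
    by rewrite -e codom_f.
  + have [j1 e1] := psi_surj H h1 (ltn_ord i1).
    have [_ b1] := hu i1; have [a2 _] := hu i2.
    move: e; rewrite (a2 (Ordinal h2)) // (b1 j1) // => e.
    have : chi j1 \notin codom phi by rewrite -pat_new ep e1.
    by rewrite e codom_f.
  + have [j1 e1] := psi_surj H h1 (ltn_ord i1).
    have [j2 e2] := psi_surj H h2 (ltn_ord i2).
    have [_ b1] := hu i1; have [_ b2] := hu i2.
    move: e; rewrite (b1 j1) // (b2 j2) // => /ci ej.
    by apply: val_inj; rewrite /= -e1 -e2 ej.
- apply/ffunP => i; rewrite !ffunE; have [a _] := hu (widen_ord (leq_addr _ n) i).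
  by rewrite (a i).
- apply/ffunP => j; rewrite !ffunE; have [_ b] := hu (Ordinal (@psi_lt psi j H)).
  by rewrite (b j).
Qed.

End Theta.


Lemma Th1_inj psi (w : {ffun 'I_(kp psi) -> 'I_N}) : injective w -> injective (Th1 w).
Proof. by move=> wi i j; rewrite !ffunE => /wi /(congr1 val) /= e; apply: val_inj. Qed.

Lemma Th2_inj psi (H : normal psi) (w : {ffun 'I_(kp psi) -> 'I_N}) :
  injective w -> injective (Th2 H w).
Proof.
move=> wi i j; rewrite !ffunE => /wi /(congr1 val) /= e.
by apply: (normal_inj H); apply: ord_inj.
Qed.

Lemma sum_fiber_pat psi (H : normal psi)
    (F : {ffun 'I_n -> 'I_N} * {ffun 'I_m -> 'I_N} -> Cplx) :
  \sum_(p | ((p.1 \in Inj n N) && (p.2 \in Inj m N)) && (pat p.1 p.2 == psi)) F p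
  = \sum_(w in Inj (kp psi) N) F (Th1 w, Th2 H w).
Proof.
rewrite -(big_imset _ (in2W (Th_inj (H:=H)))); apply: eq_bigl => -[f1 f2] /=.
apply/idP/imsetP.
  case/andP => /andP[]; rewrite !inE => /injectiveP f1i /injectiveP f2i /eqP ep.
  have [w [wi e1 e2]] := Th_img H f1i f2i ep.
  by exists w; rewrite ?inE ?e1 ?e2 //; apply/injectiveP.
case=> w; rewrite inE => /injectiveP wi [-> ->].
rewrite !inE pat_Th // eqxx andbT; apply/andP; split; apply/injectiveP.
  exact: Th1_inj.
exact: Th2_inj.
Qed.

End Pat.



Lemma tn_extp k N (f : {ffun 'I_k -> 'I_N}) (o : 'I_k) : injective f ->
  tn (extp f) o = f o.
Proof. by move=> fi; rewrite extpP // ffnE. Qed.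

Lemma conj_Th n m N (psi : {ffun 'I_m -> 'I_(n + m)}) (H : normal psi)
    (w : {ffun 'I_(kp psi) -> 'I_N}) (g h : V -> V) :
  injective w -> injective g -> suppk n g -> injective h -> suppk m h ->
  conjI (Th1 w) g \o conjI (Th2 H w) h = conjI w (g \o conjK (extp psi) h).
Proof.
move=> wi ig sg ih sh; rewrite /conjI !conjKE (conjL_mul _ _ (tnK _)) conjL_comp.
congr (_ \o _).
  apply: (conjL_local ig sg); try (by apply: tnK); try (by apply: tnKV).
  move=> j hj; rewrite -[j]/(nat_of_ord (Ordinal hj)) tn_extp; last exact: Th1_inj.
  rewrite ffunE.
  by rewrite -[X in _ = tn _ X]/(nat_of_ord (widen_ord (leq_addr #|newset psi| n) (Ordinal hj))) tn_extp.
apply: (conjL_local ih sh); try (by apply: tnK); try (by apply: tnKV);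
  try (by apply: can_comp; apply: tnK); try (by apply: can_comp; apply: tnKV).
move=> j hj; rewrite -[j]/(nat_of_ord (Ordinal hj)) tn_extp; last exact: Th2_inj.
rewrite ffunE -[RHS]/(tn (extp w) (tn (extp psi) (Ordinal hj))) tn_extp; last exact: normal_inj.
by rewrite -[X in _ = tn _ X]/(nat_of_ord (Ordinal (@psi_lt _ _ psi (Ordinal hj) H))) tn_extp.
Qed.


Lemma Dk_pat N n m (g h : V -> V) y : injective g -> suppk n g -> injective h -> suppk m h ->
  Dk N n g m h y = \sum_(psi in Pat n m) Tk N (kp psi) (g \o conjK (extp psi) h) y.
Proof.
move=> ig sg ih sh; rewrite /Dk pair_big_dep.
rewrite (partition_big (fun p => pat p.1 p.2) (mem (Pat n m))); last first.
  move=> p; rewrite !inE => /andP [] /injectiveP a /injectiveP b; exact: pat_normal.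
apply: eq_bigr => psi; rewrite !inE => H.
rewrite (sum_fiber_pat H (fun p => if `[< conjI p.1 g \o conjI p.2 h = y >] then 1 else 0)).
rewrite /Tk; apply: eq_bigr => w; rewrite inE => /injectiveP wi /=.
by rewrite conj_Th.
Qed.


End S.

HB.instance Definition _ (I : finType) (X : countType) (G : (V I X -> V I X) -> Prop) :=
  gen_eqMixin (Cls G).

Section C.
Variables (I : finType) (X : countType) (G : (V I X -> V I X) -> Prop).
Hypotheses (HG : is_subgroup G) (HS : contains_Sinf G).
Local Notation V := (V I X).

Lemma G_inj f : G f -> injective f.
Proof. by case: HG => H _ _ _ /H [/bij_inj]. Qed.

Lemma G_comp f g : G f -> G g -> G (f \o g).
Proof. by case: HG => _ _ H _; apply: H. Qed.

Lemma G_permK n (t : {perm 'I_n}) : G (Defs.permK t).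
Proof.
apply: HS; first by exists (tn t^-1); [apply: tnK | apply: tnKV].
exists (iota 0 n) => k; rewrite mem_iota add0n /= => h; apply: tn_ge.
by rewrite leqNgt.
Qed.

Lemma G_conjK n (t : {perm 'I_n}) x : G x -> G (conjK t x).
Proof. by move=> gx; rewrite /conjK; apply: G_comp; [apply: G_comp => //|]; apply: G_permK. Qed.

Lemma Gn_inj k x : Gn G k x -> injective x.
Proof. by case=> /G_inj. Qed.

Lemma Gn_supp k x : Gn G k x -> suppk k x.
Proof. by case. Qed.

Lemma conjK1 n (x : V -> V) : conjK (1%g : {perm 'I_n}) x = x.
Proof. by rewrite conjKE; apply: conjL_id => j; rewrite ?invg1 tn1. Qed.

Definition mkcls k x (H : Gn G k x) : Cls G :=
  exist _ (orbit_of (k, x)) (ex_intro _ (k, x) (conj H erefl)).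

Lemma Gn_id : Gn G 0 id.
Proof. by split => //; case: HG. Qed.

Definition clscl k x : Cls G :=
  match pselect (Gn G k x) with left H => mkcls H | right _ => mkcls Gn_id end.

Lemma clsrepP (c : Cls G) :
  Gn G (clsrep c).1 (clsrep c).2 /\ sval c = orbit_of (clsrep c).
Proof. by rewrite /clsrep; case: (cid _) => r. Qed.

Lemma clscl_rep k x : Gn G k x ->
  (clsrep (clscl k x)).1 = k /\ exists t : {perm 'I_k}, (clsrep (clscl k x)).2 = conjK t x.
Proof.
move=> H; have [_ e] := clsrepP (clscl k x).
move: e; rewrite /clscl; case: pselect => // H' /= e.
have : orbit_of (clsrep (mkcls H')) (clsrep (mkcls H')).
  by split => //; exists 1%g; rewrite conjK1.
by rewrite -e.
Qed.


Lemma Tk_conj N k (t : {perm 'I_k}) (x : V -> V) y : injective x -> suppk k x ->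
  Tk N k (conjK t x) y = Tk N k x y.
Proof.
move=> ix sx; rewrite /Tk.
pose h (f : {ffun 'I_k -> 'I_N}) : {ffun 'I_k -> 'I_N} := [ffun i => f (t i)].
have hi : injective h.
  move=> f1 f2 e; apply/ffunP => i.
  have := congr1 (fun f : {ffun 'I_k -> 'I_N} => f (t^-1 i)%g) e.
  by rewrite !ffunE permKV.
rewrite [RHS](reindex_inj hi); apply: eq_big => f.
  rewrite !inE; apply/injectiveP/injectiveP => fi i j.
    by rewrite !ffunE => /fi /perm_inj.
  move=> e; have := congr1 (fun f : {ffun 'I_k -> 'I_N} => f (t^-1 i)%g) (erefl (h f)).
  by rewrite -(permKV t i) -(permKV t j) in e *; move: e; rewrite -!(ffunE (fun i => f (t i))) => /fi ->.
rewrite inE => /injectiveP fi.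
have hfi : injective (h f) by move=> i j; rewrite !ffunE => /fi /perm_inj.
congr (if `[< _ = y >] then _ else _).
rewrite /conjI !conjKE conjL_comp.
apply: (conjL_local ix sx); try (by apply: tnK); try (by apply: tnKV);
  try (by apply: can_comp; apply: tnK); try (by apply: can_comp; apply: tnKV).
move=> j hj; rewrite -[j]/(nat_of_ord (Ordinal hj)).
by rewrite -[LHS]/(tn (extp f) (tn t (Ordinal hj))) tnE tn_extp // tn_extp // ffunE.
Qed.


Lemma supp_comp k (x z : V -> V) : suppk k x -> suppk k z -> suppk k (x \o z).
Proof. by move=> sx sz v hv /=; rewrite sz // sx. Qed.

Lemma Gn_xpsi n m (g h : V -> V) (psi : {ffun 'I_m -> 'I_(n + m)}) :
  Gn G n g -> Gn G m h -> normal psi ->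
  Gn G (kp psi) (g \o conjK (extp psi) h).
Proof.
move=> [gg sg] [gh sh] H; split; first by apply: G_comp => //; apply: G_conjK.
apply: supp_comp; first by apply: supp_mon sg; apply: leq_addr.
rewrite conjKE; apply: (conjL_supp sh); try (by apply: tnK); try (by apply: tnKV).
move=> j hj; rewrite -[j]/(nat_of_ord (Ordinal hj)) tn_extp; last exact: normal_inj.
exact: psi_lt.
Qed.

Definition TT N (e : Cls G) y := Tk N (clsrep e).1 (clsrep e).2 y.

Lemma Tk_cls N k x y : Gn G k x -> TT N (clscl k x) y = Tk N k x y.
Proof.
move=> H; have [e1 [t e2]] := clscl_rep H; rewrite /TT e2.
move: t e2; rewrite e1 => t e2.
by rewrite Tk_conj //; [apply: Gn_inj H | apply: Gn_supp H].
Qed.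

Definition clsp (c d : Cls G) (psi : {ffun 'I_(clsrep d).1 -> 'I_((clsrep c).1 + (clsrep d).1)}) :=
  clscl (kp psi) ((clsrep c).2 \o conjK (extp psi) (clsrep d).2).
Definition slist (c d : Cls G) : seq (Cls G) :=
  [seq @clsp c d psi | psi <- enum (Pat (clsrep c).1 (clsrep d).1)].
Definition acoef (c d e : Cls G) : nat := count_mem e (slist c d).
Definition asupp (c d : Cls G) : seq (Cls G) := undup (slist c d).

Lemma sum_undup_count (T : eqType) (s : seq T) (F : T -> Cplx) :
  \sum_(i <- s) F i = \sum_(i <- undup s) (count_mem i s)%:R * F i.
Proof.
rewrite -big_undup_iterop_count; apply: eq_bigr => i _.
case: (count_mem i s) => [|k]; first by rewrite mul0r.
by rewrite iteropS iter_addr addrC -mulrS mulr_natl.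
Qed.

Lemma Dec N (c d : Cls G) y :
  Dk N (clsrep c).1 (clsrep c).2 (clsrep d).1 (clsrep d).2 y =
  \sum_(e <- asupp c d) (acoef c d e)%:R * TT N e y.
Proof.
have [Hc _] := clsrepP c; have [Hd _] := clsrepP d.
rewrite Dk_pat; [|exact: Gn_inj Hc|exact: Gn_supp Hc|exact: Gn_inj Hd|exact: Gn_supp Hd].
rewrite /asupp /acoef -sum_undup_count /slist big_map big_enum /=.
apply: eq_bigr => psi; rewrite inE => H.
by rewrite /clsp Tk_cls //; apply: (Gn_xpsi Hc Hd H).

Qed.


Lemma coef_flatten (ss : seq (fsum I X)) y : coef (flatten ss) y = \sum_(s <- ss) coef s y.
Proof. by rewrite /coef big_flatten. Qed.

Lemma coef_fscale k (s : fsum I X) y : coef (fscale k s) y = k * coef s y.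
Proof.
rewrite /coef /fscale big_map mulr_sumr; apply: eq_bigr => p _ /=.
by case: ifP; rewrite ?mulr0.
Qed.

Lemma coefAN_cls N e y : coef (AN N (clsrep e)) y = TT N e y.
Proof.
rewrite /TT; have [H _] := clsrepP e; move: H.
case: (clsrep e) => k x H /=; apply: coefAN; [exact: Gn_inj H | exact: Gn_supp H].
Qed.

Lemma coef_fmulANp N (p q : nat * (V -> V)) y : Gn G p.1 p.2 -> Gn G q.1 q.2 ->
  coef (fmul (AN N p) (AN N q)) y = Dk N p.1 p.2 q.1 q.2 y.
Proof.
case: p => n g; case: q => m h /= Hp Hq.
by apply: coef_fmulAN; [exact: Gn_inj Hp | exact: Gn_supp Hp | exact: Gn_inj Hq | exact: Gn_supp Hq].
Qed.

Lemma part3 N (c d : Cls G) :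
  feq (fmul (AN N (clsrep c)) (AN N (clsrep d)))
      (flatten [seq fscale (acoef c d e)%:R (AN N (clsrep e)) | e <- asupp c d]).
Proof.
move=> y; have [Hc _] := clsrepP c; have [Hd _] := clsrepP d.
rewrite coef_fmulANp // Dec coef_flatten big_map; apply: eq_bigr => e _.
by rewrite coef_fscale coefAN_cls.
Qed.

Lemma in_In (T : eqType) (x : T) (s : seq T) : x \in s -> List.In x s.
Proof. by elim: s => //= z s IH; rewrite inE => /orP[/eqP ->|/IH]; [left|right]. Qed.

Lemma uniq_NoDup (T : eqType) (s : seq T) : uniq s -> List.NoDup s.
Proof.
elim: s => [|z s IH] /=; first by constructor.
case/andP => zs us; constructor; last exact: IH.
move=> zi; move/negP: zs; apply; elim: s zi {IH us} => //= w s IH [->|/IH].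
  by rewrite inE eqxx.
by rewrite inE => ->; rewrite orbT.
Qed.

Lemma part1 (c d : Cls G) : List.NoDup (asupp c d).
Proof. by apply: uniq_NoDup; apply: undup_uniq. Qed.

Lemma part2 (c d e : Cls G) : acoef c d e <> 0%N -> List.In e (asupp c d).
Proof.
move=> h; apply: in_In; rewrite mem_undup; apply/negPn/negP => /count_memPn.
by rewrite /acoef in h.
Qed.

End C.

Section A.
Variables (I : finType) (X : countType) (G : (V I X -> V I X) -> Prop).
Hypotheses (HG : is_subgroup G) (HS : contains_Sinf G).
Local Notation V := (V I X).

Lemma ind_eq (P Q : Prop) : (P <-> Q) -> `[< P >] = `[< Q >].
Proof. by move=> [pq qp]; apply/asboolP/asboolP. Qed.

Lemma conjK_can n (t : {perm 'I_n}) (x x' : V -> V) : cancel x x' ->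
  cancel (conjK t x) (conjK t x').
Proof. by move=> xK v; rewrite !conjKE /conjL /= (lift_can (tnK t)) xK (lift_can (tnKV t)). Qed.

Lemma Gbij (x : V -> V) : G x -> bijective x.
Proof. by case: HG => H _ _ _ /H []. Qed.

Definition Trip N (c d f : Cls G) y : Cplx :=
  \sum_(p in Inj (clsrep c).1 N) \sum_(q in Inj (clsrep d).1 N) \sum_(r in Inj (clsrep f).1 N)
    (if `[< conjI p (clsrep c).2 \o conjI q (clsrep d).2 \o conjI r (clsrep f).2 = y >]
     then 1 else 0).

Lemma left_assoc N (c d f : Cls G) y :
  Trip N c d f y = \sum_(e <- asupp HG c d) (acoef HG c d e)%:R *
     Dk N (clsrep e).1 (clsrep e).2 (clsrep f).1 (clsrep f).2 y.
Proof.
have [[Gf _] _] := clsrepP f.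
have [u' uK uK'] := Gbij Gf.
rewrite /Trip.
transitivity (\sum_(r in Inj (clsrep f).1 N)
   Dk N (clsrep c).1 (clsrep c).2 (clsrep d).1 (clsrep d).2 (y \o conjK (extp r) u')).
  rewrite (eq_bigr (fun p => \sum_(r in Inj (clsrep f).1 N) \sum_(q in Inj (clsrep d).1 N)
     (if `[< conjI p (clsrep c).2 \o conjI q (clsrep d).2 \o conjI r (clsrep f).2 = y >]
     then 1 else 0))); last by move=> p _; rewrite exchange_big.
  rewrite exchange_big; apply: eq_bigr => r _; apply: eq_bigr => p _; apply: eq_bigr => q _.
  congr (if _ then _ else _); apply: ind_eq; split => [<-|->].
    by apply: funext => v /=; rewrite /conjI (conjK_can _ uK').
  by apply: funext => v /=; rewrite /conjI (conjK_can _ uK).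
rewrite (eq_bigr (fun r => \sum_(e <- asupp HG c d) (acoef HG c d e)%:R *
   TT N e (y \o conjK (extp r) u'))); last by move=> r _; rewrite Dec.
rewrite exchange_big; apply: eq_bigr => e _; rewrite -mulr_sumr; congr (_ * _).
rewrite /TT /Tk /Dk exchange_big; apply: eq_bigr => w _; apply: eq_bigr => r _.
congr (if _ then _ else _); apply: ind_eq; split => [->|<-].
  by apply: funext => v /=; rewrite /conjI (conjK_can _ uK).
by apply: funext => v /=; rewrite /conjI (conjK_can _ uK').
Qed.


Lemma right_assoc N (c d f : Cls G) y :
  Trip N c d f y = \sum_(e <- asupp HG d f) (acoef HG d f e)%:R *
     Dk N (clsrep c).1 (clsrep c).2 (clsrep e).1 (clsrep e).2 y.
Proof.
have [[Gc _] _] := clsrepP c.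
have [g' gK gK'] := Gbij Gc.
rewrite /Trip.
transitivity (\sum_(p in Inj (clsrep c).1 N)
   Dk N (clsrep d).1 (clsrep d).2 (clsrep f).1 (clsrep f).2 (conjK (extp p) g' \o y)).
  apply: eq_bigr => p _; apply: eq_bigr => q _; apply: eq_bigr => r _.
  congr (if _ then _ else _); apply: ind_eq; split => [<-|e].
    by apply: funext => v /=; rewrite /conjI (conjK_can _ gK).
  apply: funext => v /=; have ev := congr1 (fun z => z v) e; simpl in ev.
  by rewrite ev /conjI (conjK_can _ gK').
rewrite (eq_bigr (fun p => \sum_(e <- asupp HG d f) (acoef HG d f e)%:R *
   TT N e (conjK (extp p) g' \o y))); last by move=> p _; rewrite Dec.
rewrite exchange_big; apply: eq_bigr => e _; rewrite -mulr_sumr; congr (_ * _).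
rewrite /TT /Tk /Dk; apply: eq_bigr => p _; apply: eq_bigr => w _.
congr (if _ then _ else _); apply: ind_eq; split => [->|<-].
  by apply: funext => v /=; rewrite /conjI (conjK_can _ gK').
by apply: funext => v /=; rewrite /conjI (conjK_can _ gK).
Qed.

Lemma assocE N (c d f : Cls G) y :
  \sum_(e <- asupp HG c d) (acoef HG c d e)%:R *
     \sum_(h <- asupp HG e f) (acoef HG e f h)%:R * TT N h y =
  \sum_(e <- asupp HG d f) (acoef HG d f e)%:R *
     \sum_(h <- asupp HG c e) (acoef HG c e h)%:R * TT N h y.
Proof.
have := left_assoc N c d f y; rewrite right_assoc => E.
rewrite (eq_bigr (fun e => (acoef HG c d e)%:R *
  Dk N (clsrep e).1 (clsrep e).2 (clsrep f).1 (clsrep f).2 y)); last by move=> e _; rewrite Dec.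
rewrite -E; apply: eq_bigr => e _; by rewrite Dec.
Qed.


Lemma conjK_mul n (s t : {perm 'I_n}) (x : V -> V) :
  conjK s (conjK t x) = conjK (t * s)%g x.
Proof.
rewrite !conjKE conjL_comp; congr conjL; apply: funext => j /=.
  by rewrite tnM.
by rewrite invMg tnM.
Qed.

Lemma orbit_conj n (x : V -> V) (t : {perm 'I_n}) :
  orbit_of (n, conjK t x) = orbit_of (n, x).
Proof.
apply: funext => -[k z]; apply: propext; rewrite /orbit_of /=; split.
  by case=> ek [s ->]; split => //; exists (t * s)%g; rewrite conjK_mul.
case=> ek [s ->]; split => //; exists (t^-1 * s)%g.
by rewrite conjK_mul mulKVg.
Qed.

Lemma cls_eq (h h' : Cls G) N : (clsrep h).1 = N -> (clsrep h').1 = N ->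
  (exists t : {perm 'I_N}, (clsrep h).2 = conjK t (clsrep h').2) -> h = h'.
Proof.
move=> E1 E2 E3.
have [_ e] := clsrepP h; have [_ e'] := clsrepP h'.
suff ee : sval h = sval h'.
  by case: h ee {e E1 E3} => S pS; case: h' {e' E2} => S' pS' /= ee; subst S';
     congr exist; apply: Prop_irrelevance.
rewrite e e'; move: (clsrep h) (clsrep h') E1 E2 E3 => [k z] [k' z'] /= E1 E2 [t E3].
by subst k k'; rewrite E3 orbit_conj.
Qed.

Lemma Tk_self k (x : V -> V) : injective x -> suppk k x -> Tk k k x x != 0.
Proof.
move=> ix sx; pose w0 : {ffun 'I_k -> 'I_k} := [ffun i => i].
have w0i : injective w0 by move=> i j; rewrite !ffunE.
have w0x : conjI w0 x = x.
  rewrite /conjI -[RHS](conjK1 k x); apply: (conjK_local ix sx) => j hj.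
  by rewrite -[j]/(nat_of_ord (Ordinal hj)) tn_extp // ffunE tnE perm1.
rewrite /Tk (bigD1 w0) /=; last by rewrite inE; apply/injectiveP.
have -> : `[< conjI w0 x = x >] = true by apply/asboolP.
rewrite paddr_eq0 ?oner_eq0 ?ler01 //; apply: sumr_ge0 => i _.
by case: ifP => _; rewrite ?ler01 ?lexx.
Qed.

Lemma TT_nz_eq N (e e0 : Cls G) : (clsrep e).1 = N -> (clsrep e0).1 = N ->
  TT N e (clsrep e0).2 != 0 -> e0 = e.
Proof.
move=> E E0 nz.
case: (pselect (exists w : {ffun 'I_(clsrep e).1 -> 'I_N},
   conjI w (clsrep e).2 = (clsrep e0).2)) => [[w hw]|nw]; last first.
  move: nz; rewrite /TT /Tk big1 ?eqxx // => w _.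
  by case: asboolP => // hw; case: nw; exists w.
apply: (cls_eq E0 E); exists (extp w); by rewrite -hw.
Qed.

Lemma indep (L R : Cls G -> nat) (U : seq (Cls G)) : uniq U ->
  (forall N y, \sum_(h <- U) (L h)%:R * TT N h y = \sum_(h <- U) (R h)%:R * TT N h y) ->
  forall h, h \in U -> L h = R h.
Proof.
move=> uU E.
suff S : forall k h, h \in U -> ((clsrep h).1 < k)%N -> L h = R h.
  by move=> h hU; apply: (S (clsrep h).1.+1).
elim=> [//|k IH] h hU hk.
case: (ltnP (clsrep h).1 k) => hk'; first exact: IH.
have ek : (clsrep h).1 = k by apply/eqP; rewrite eqn_leq hk' -ltnS hk.
have := E k (clsrep h).2; move/eqP; rewrite -subr_eq0 -sumrB (bigD1_seq h) //=.
rewrite big1_seq ?addr0; last first.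
  move=> h' /andP [ne h'U].
  case: (ltngtP (clsrep h').1 k) => c.
  - by rewrite (IH h' h'U c) subrr.
  - by rewrite /TT Tk0 // !mulr0 subrr.
  - have : TT k h' (clsrep h).2 == 0.
      apply/negPn/negP => nz; have := TT_nz_eq c ek nz.
      by move=> eh; rewrite eh eqxx in ne.
    by move/eqP ->; rewrite !mulr0 subrr.
rewrite -mulrBl mulf_eq0 => /orP [|].
  by rewrite subr_eq0 eqr_nat => /eqP.
have [[Gh sh] _] := clsrepP h.
have := Tk_self (G_inj HG Gh) sh; rewrite ek => /negPf.
by rewrite /TT ek => ->.
Qed.


Lemma sub_sum (T : eqType) (t U : seq T) (F : T -> Cplx) : uniq t -> uniq U ->
  {subset t <= U} -> (forall x, x \notin t -> F x = 0) ->
  \sum_(x <- t) F x = \sum_(x <- U) F x.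
Proof.
move=> ut uU sub F0.
rewrite [RHS](bigID (mem t)) /= [X in _ = _ + X]big1 ?addr0; last first.
  by move=> x /F0.
rewrite -[RHS]big_filter; apply: perm_big; apply: uniq_perm => //; first exact: filter_uniq.
move=> x; rewrite mem_filter /=; case: (boolP (x \in t)) => //= xt.
by rewrite (sub _ xt).
Qed.

Lemma acoef_in (a b x : Cls G) : acoef HG a b x != 0%N -> x \in asupp HG a b.
Proof. by move=> nz; rewrite mem_undup; apply/negPn/negP => /count_memPn; apply/eqP. Qed.

Lemma part4 (c d f h : Cls G) :
  (\sum_(e <- asupp HG c d) acoef HG c d e * acoef HG e f h =
   \sum_(e <- asupp HG d f) acoef HG d f e * acoef HG c e h)%N.
Proof.
pose U := undup (flatten [seq asupp HG e f | e <- asupp HG c d] ++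
                 flatten [seq asupp HG c e | e <- asupp HG d f]).
pose L x := (\sum_(e <- asupp HG c d) acoef HG c d e * acoef HG e f x)%N.
pose R x := (\sum_(e <- asupp HG d f) acoef HG d f e * acoef HG c e x)%N.
have conv : forall N y (s : seq (Cls G)) (A : Cls G -> nat) (B : Cls G -> seq (Cls G))
     (Cf : Cls G -> Cls G -> nat),
     (forall e, e \in s -> {subset B e <= U}) -> (forall e, uniq (B e)) ->
     (forall e x, Cf e x != 0%N -> x \in B e) ->
     \sum_(e <- s) (A e)%:R * \sum_(x <- B e) (Cf e x)%:R * TT N x y =
     \sum_(x <- U) (\sum_(e <- s) A e * Cf e x)%N%:R * TT N x y.
  move=> N y s A B Cf sub uB inB.
  rewrite big_seq (eq_bigr (fun e => \sum_(x <- U) (A e)%:R * ((Cf e x)%:R * TT N x y)));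
    last first.
    move=> e es; rewrite mulr_sumr; apply: sub_sum => //; first exact: undup_uniq.
      exact: sub.
    move=> x xn; have -> : Cf e x = 0%N by apply/eqP; apply: contraNT xn; apply: inB.
    by rewrite mul0r mulr0.
  rewrite -big_seq exchange_big; apply: eq_bigr => x _.
  by rewrite natr_sum mulr_suml; apply: eq_bigr => e _; rewrite natrM mulrA.
have key : forall N y, \sum_(x <- U) (L x)%:R * TT N x y = \sum_(x <- U) (R x)%:R * TT N x y.
  move=> N y; have := assocE N c d f y.
  rewrite (conv N y _ _ (fun e => asupp HG e f) (fun e x => acoef HG e f x)); first last.
  - by move=> e x; apply: acoef_in.
  - by move=> e; apply: undup_uniq.
  - move=> e es x xe; rewrite mem_undup mem_cat; apply/orP; left.
    by apply/flatten_mapP; exists e.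
  rewrite (conv N y _ _ (fun e => asupp HG c e) (fun e x => acoef HG c e x)); first last.
  - by move=> e x; apply: acoef_in.
  - by move=> e; apply: undup_uniq.
  - move=> e es x xe; rewrite mem_undup mem_cat; apply/orP; right.
    by apply/flatten_mapP; exists e.
  by [].
case: (boolP (h \in U)) => hU.
  exact: (indep (undup_uniq _) key hU).
have z1 : L h = 0%N.
  rewrite /L big1_seq // => e /andP [_ es].
  have -> : acoef HG e f h = 0%N; last by rewrite muln0.
  apply/eqP; apply: contraNT hU => nz; rewrite mem_undup mem_cat; apply/orP; left.
  by apply/flatten_mapP; exists e => //; apply: acoef_in.
have z2 : R h = 0%N.
  rewrite /R big1_seq // => e /andP [_ es].
  have -> : acoef HG c e h = 0%N; last by rewrite muln0.
  apply/eqP; apply: contraNT hU => nz; rewrite mem_undup mem_cat; apply/orP; right.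
  by apply/flatten_mapP; exists e => //; apply: acoef_in.
by rewrite -/(L h) -/(R h) z1 z2.
Qed.

End A.

Theorem theorem2p1 (I : finType) (X : countType)
  (G : (V I X -> V I X) -> Prop)
  (HG : is_subgroup G) (HS : contains_Sinf G) :
  exists (a : Cls G -> Cls G -> Cls G -> nat)
         (supp : Cls G -> Cls G -> seq (Cls G)),
    (forall c d, List.NoDup (supp c d)) /\
    (forall c d e, a c d e <> 0%N -> List.In e (supp c d)) /\
    (forall (N : nat) (c d : Cls G),
        feq (fmul (AN N (clsrep c)) (AN N (clsrep d)))
            (flatten [seq fscale (a c d e)%:R (AN N (clsrep e)) | e <- supp c d])) /\
    (forall c d f h : Cls G,
        (\sum_(e <- supp c d) a c d e * a e f h =
         \sum_(e <- supp d f) a d f e * a c e h)%N).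
Proof.
exists (acoef HG), (asupp HG); split; first by move=> c d; apply: part1.
split; first by move=> c d e; apply: part2.
split; first by move=> N c d; apply: part3.
by move=> c d f h; apply: part4.
Qed.
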